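(* Let $\bm X\in\mathbb{IR}^n$ and let $(f^{\rm u},f^{\rm o})_{\bm X}$ be a superposition relaxation of $f:\bm X\to\mathbb{R}$ with continuous summands, and suppose $\mathcal P^{\rm u}=\{i:\operatorname{wid}(f^{\rm u}_i(X_i))>0\}$ and $\mathcal P^{\rm o}=\{i:\operatorname{wid}(f^{\rm o}_i(X_i))>0\}$ are nonempty. Let $F=[\underline F,\overline F]\in\mathbb{IR}$ satisfy $f(\bm x)\in F$ for all $\bm x\in\bm X$. With $\theta^{\rm u}_i=\operatorname{wid}(f^{\rm u}_i(X_i))/\operatorname{wid}(f^{\rm u}(\bm X))$ and $\theta^{\rm o}_i=\operatorname{wid}(f^{\rm o}_i(X_i))/\operatorname{wid}(f^{\rm o}(\bm X))$, the summands $$f^{\rm u,ref}_i(x_i)=\max\{f^{\rm u}_i(x_i)-\underline f^{\rm u}_i(X_i)+\underline f^{\rm u}(\bm X),\underline F\}-(1-\theta^{\rm u}_i)\max\{\underline f^{\rm u}(\bm X),\underline F\},\quad i\in\mathcal P^{\rm u},$$ $$f^{\rm o,ref}_i(x_i)=\min\{f^{\rm o}_i(x_i)-\overline f^{\rm o}_i(X_i)+\overline f^{\rm o}(\bm X),\overline F\}-(1-\theta^{\rm o}_i)\min\{\overline f^{\rm o}(\bm X),\overline F\},\quad i\in\mathcal P^{\rm o},$$ with all other summands identically zero, define a superposition relaxation $(f^{\rm u,ref},f^{\rm o,ref})_{\bm X}$ of $f$ on $\bm X$.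
   Context: $\mathbb{IR}$ is the set of compact real intervals and $\mathbb{IR}^n$ the set of boxes $\bm X=X_1\times\cdots\times X_n$. A superposition relaxation of $f:\bm X\to\mathbb{R}$ on $\bm X$ is a pair of separable functions $f^{\rm u}(\bm x)=\sum_i f^{\rm u}_i(x_i)$, $f^{\rm o}(\bm x)=\sum_i f^{\rm o}_i(x_i)$ with $f^{\rm u}_i,f^{\rm o}_i:X_i\to\mathbb{R}$ and $f^{\rm u}\le f\le f^{\rm o}$ on $\bm X$. Notation: $\underline f^{\rm u}_i(X_i)=\min_{X_i}f^{\rm u}_i$, $\overline f^{\rm u}_i(X_i)=\max_{X_i}f^{\rm u}_i$, $\operatorname{wid}(f^{\rm u}_i(X_i))=\overline f^{\rm u}_i(X_i)-\underline f^{\rm u}_i(X_i)$, $\underline f^{\rm u}(\bm X)=\sum_i\underline f^{\rm u}_i(X_i)$, $\overline f^{\rm u}(\bm X)=\sum_i\overline f^{\rm u}_i(X_i)$, $\operatorname{wid}(f^{\rm u}(\bm X))=\overline f^{\rm u}(\bm X)-\underline f^{\rm u}(\bm X)$; likewise for $f^{\rm o}$. *)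

(* Defs.v *)
From HB Require Import structures.
From mathcomp Require Import all_boot all_order all_algebra.
From mathcomp Require Import all_classical all_reals all_analysis.
Set Implicit Arguments. Unset Strict Implicit. Unset Printing Implicit Defensive.
Import Order.TTheory GRing.Theory Num.Theory.
Import numFieldNormedType.Exports.
Local Open Scope classical_set_scope.
Local Open Scope ring_scope.

Section Defs.
Variables (R : realType) (n : nat).

Definition in_box (a b : 'I_n -> R) (x : 'I_n -> R) : Prop :=
  forall i, a i <= x i <= b i.

(* min / max of a summand g over the compact interval [a, b]
   (realized as inf / sup of the image; these are attained for continuous g) *)
Definition lo_on (g : R -> R) (a b : R) : R := inf (g @` `[a, b]).
Definition hi_on (g : R -> R) (a b : R) : R := sup (g @` `[a, b]).
Definition wid_on (g : R -> R) (a b : R) : R := hi_on g a b - lo_on g a b.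

Definition lo_sum (g : 'I_n -> R -> R) (a b : 'I_n -> R) : R :=
  \sum_(i < n) lo_on (g i) (a i) (b i).
Definition hi_sum (g : 'I_n -> R -> R) (a b : 'I_n -> R) : R :=
  \sum_(i < n) hi_on (g i) (a i) (b i).
Definition wid_sum (g : 'I_n -> R -> R) (a b : 'I_n -> R) : R :=
  hi_sum g a b - lo_sum g a b.

Definition sep (g : 'I_n -> R -> R) (x : 'I_n -> R) : R :=
  \sum_(i < n) g i (x i).

Definition superposition_relaxation (a b : 'I_n -> R) (f : ('I_n -> R) -> R)
  (fu fo : 'I_n -> R -> R) : Prop :=
  forall x, in_box a b x -> sep fu x <= f x /\ f x <= sep fo x.

Definition fu_ref (a b : 'I_n -> R) (fu : 'I_n -> R -> R) (Flo : R)
  : 'I_n -> R -> R :=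
  fun i t =>
    if 0 < wid_on (fu i) (a i) (b i) then
      Num.max (fu i t - lo_on (fu i) (a i) (b i) + lo_sum fu a b) Flo
      - (1 - wid_on (fu i) (a i) (b i) / wid_sum fu a b)
          * Num.max (lo_sum fu a b) Flo
    else 0.

Definition fo_ref (a b : 'I_n -> R) (fo : 'I_n -> R -> R) (Fhi : R)
  : 'I_n -> R -> R :=
  fun i t =>
    if 0 < wid_on (fo i) (a i) (b i) then
      Num.min (fo i t - hi_on (fo i) (a i) (b i) + hi_sum fo a b) Fhi
      - (1 - wid_on (fo i) (a i) (b i) / wid_sum fo a b)
          * Num.min (hi_sum fo a b) Fhi
    else 0.

End Defs.

(* Main.v *)
Require Import Defs.
From HB Require Import structures.
From mathcomp Require Import all_boot all_order all_algebra.
From mathcomp Require Import all_classical all_reals all_analysis.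
From mathcomp Require Import lra.
Import Order.TTheory GRing.Theory Num.Theory.
Import numFieldNormedType.Exports.
Local Open Scope classical_set_scope.
Local Open Scope ring_scope.

Lemma smax (R : realType) (L F p q : R) : 0 <= p -> 0 <= q ->
  Num.max (L + p) F + Num.max (L + q) F <= Num.max (L + (p + q)) F + Num.max L F.
Proof.
move=> hp hq.
case: (leP (L+p) F) => h1; case: (leP (L+q) F) => h2;
case: (leP (L+(p+q)) F) => h3; case: (leP L F) => h4;
rewrite ?max_r ?max_l //; try lra.
Qed.

Lemma smin (R : realType) (L F p q : R) : p <= 0 -> q <= 0 ->
  Num.min (L + (p + q)) F + Num.min L F <= Num.min (L + p) F + Num.min (L + q) F.
Proof.
move=> hp hq.
case: (leP (L+p) F) => h1; case: (leP (L+q) F) => h2;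
case: (leP (L+(p+q)) F) => h3; case: (leP L F) => h4;
rewrite ?min_r ?min_l //; try lra.
Qed.

Lemma smaxs (R : realType) (I : Type) (s : seq I) (g : I -> R) (L F : R) :
  (forall i, 0 <= g i) ->
  \sum_(i <- s) Num.max (L + g i) F + Num.max L F <=
  Num.max (L + \sum_(i <- s) g i) F + (size s)%:R * Num.max L F.
Proof.
move=> hg; elim: s => [|i s IH]; first by rewrite !big_nil addr0 add0r mul0r addr0.
rewrite !big_cons /=.
have := @smax _ L F _ _ (hg i) (@sumr_ge0 _ _ s xpredT g (fun j _ => hg j)).
rewrite -natr1 mulrDl mul1r; lra.
Qed.

Lemma smins (R : realType) (I : Type) (s : seq I) (g : I -> R) (L F : R) :
  (forall i, g i <= 0) ->
  Num.min (L + \sum_(i <- s) g i) F + (size s)%:R * Num.min L F <=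
  \sum_(i <- s) Num.min (L + g i) F + Num.min L F.
Proof.
move=> hg; elim: s => [|i s IH]; first by rewrite !big_nil addr0 add0r mul0r addr0.
rewrite !big_cons /=.
have hs : \sum_(j <- s) g j <= 0 by rewrite -oppr_ge0 -sumrN; apply: sumr_ge0 => j _; rewrite oppr_ge0.
have := @smin _ L F _ _ (hg i) hs.
rewrite -natr1 mulrDl mul1r; lra.
Qed.
Lemma bnds (R : realType) (g : R -> R) (a b : R) : a <= b ->
  {within `[a, b], continuous g} -> forall t, a <= t <= b ->
  lo_on g a b <= g t /\ g t <= hi_on g a b.
Proof.
move=> ab cg t tab.
have tin : t \in `[a, b] by rewrite in_itv /=.
have [c _ Hc] := EVT_max ab cg.
have [d _ Hd] := EVT_min ab cg.
split.
- apply: ge_inf; last by exists t.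
  exists (g d) => y [s sin <-]; exact: Hd.
- apply: sup_upper_bound; last by exists t.
  split; first by exists (g t), t.
  exists (g c) => y [s sin <-]; exact: Hc.
Qed.

Lemma size_ie n : size (index_enum 'I_n) = n.
Proof. by rewrite /index_enum -enumT size_enum_ord. Qed.

Lemma lower (R : realType) (n : nat) (a b : 'I_n -> R)
  (f : ('I_n -> R) -> R) (fu : 'I_n -> R -> R) (Flo : R) :
  (forall i, a i <= b i) ->
  (forall i, {within `[a i, b i], continuous (fu i)}) ->
  (exists i, 0 < wid_on (fu i) (a i) (b i)) ->
  forall x, in_box a b x -> sep fu x <= f x -> Flo <= f x ->
  sep (fu_ref a b fu Flo) x <= f x.
Proof.
move=> hab cu [iu hiu] x xb hs hF.
have bu i := @bnds _ _ _ _ (hab i) (cu i) _ (xb i).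
pose lo i := lo_on (fu i) (a i) (b i).
pose w i := wid_on (fu i) (a i) (b i).
pose L := lo_sum fu a b. pose W := wid_sum fu a b.
pose M := Num.max L Flo.
pose g i := fu i (x i) - lo i.
have wge i : 0 <= w i.
  rewrite /w /wid_on subr_ge0; case: (bu i) => h1 h2; exact: le_trans h1 h2.
have Weq : W = \sum_i w i by rewrite /W /wid_sum /hi_sum /lo_sum /w /wid_on sumrB.
have Wpos : 0 < W.
  rewrite Weq (bigD1 iu) //=; apply: (lt_le_trans hiu); rewrite lerDl.
  by apply: sumr_ge0 => i _.
have key i : fu_ref a b fu Flo i (x i) = Num.max (L + g i) Flo - (1 - w i / W) * M.
  rewrite /fu_ref -/(w i) -/W -/L -/M /g -/(lo i) (addrC (fu i (x i) - lo i)).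
  case: ifP => // hw.
  have w0 : w i = 0 by apply/eqP; rewrite eq_le wge andbT leNgt hw.
  have : fu i (x i) = lo i.
    case: (bu i) => h1 h2; move: w0 h1 h2; rewrite /w /wid_on /lo; lra.
  by move=> ->; rewrite subrr addr0 w0 mul0r subr0 mul1r subrr.
have gge i : 0 <= g i by rewrite /g subr_ge0; case: (bu i).
have sepE : L + \sum_i g i = sep fu x.
  rewrite /L /lo_sum /sep -big_split /=; apply: eq_bigr => i _; rewrite /g /lo.
  by rewrite addrC subrK.
have S := @smaxs _ _ (index_enum 'I_n) _ L Flo gge.
rewrite size_ie -/M sepE in S.
have hm : Num.max (sep fu x) Flo <= f x by rewrite ge_max hs hF.
have th : \sum_i (1 - w i / W) * M = (n%:R - 1) * M.
  rewrite -mulr_suml sumrB sumr_const card_ord -mulr_suml -Weq divff //.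
  by rewrite gt_eqF.
rewrite /sep (eq_bigr _ (fun i _ => key i)) sumrB th.
move: S hm; rewrite mulrBl mul1r; lra.
Qed.

Lemma upper (R : realType) (n : nat) (a b : 'I_n -> R)
  (f : ('I_n -> R) -> R) (fo : 'I_n -> R -> R) (Fhi : R) :
  (forall i, a i <= b i) ->
  (forall i, {within `[a i, b i], continuous (fo i)}) ->
  (exists i, 0 < wid_on (fo i) (a i) (b i)) ->
  forall x, in_box a b x -> f x <= sep fo x -> f x <= Fhi ->
  f x <= sep (fo_ref a b fo Fhi) x.
Proof.
move=> hab cu [iu hiu] x xb hs hF.
have bu i := @bnds _ _ _ _ (hab i) (cu i) _ (xb i).
pose hi i := hi_on (fo i) (a i) (b i).
pose w i := wid_on (fo i) (a i) (b i).
pose L := hi_sum fo a b. pose W := wid_sum fo a b.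
pose M := Num.min L Fhi.
pose g i := fo i (x i) - hi i.
have wge i : 0 <= w i.
  rewrite /w /wid_on subr_ge0; case: (bu i) => h1 h2; exact: le_trans h1 h2.
have Weq : W = \sum_i w i by rewrite /W /wid_sum /hi_sum /lo_sum /w /wid_on sumrB.
have Wpos : 0 < W.
  rewrite Weq (bigD1 iu) //=; apply: (lt_le_trans hiu); rewrite lerDl.
  by apply: sumr_ge0 => i _.
have key i : fo_ref a b fo Fhi i (x i) = Num.min (L + g i) Fhi - (1 - w i / W) * M.
  rewrite /fo_ref -/(w i) -/W -/L -/M /g -/(hi i) (addrC (fo i (x i) - hi i)).
  case: ifP => // hw.
  have w0 : w i = 0 by apply/eqP; rewrite eq_le wge andbT leNgt hw.
  have : fo i (x i) = hi i.
    case: (bu i) => h1 h2; move: w0 h1 h2; rewrite /w /wid_on /hi; lra.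
  by move=> ->; rewrite subrr addr0 w0 mul0r subr0 mul1r subrr.
have gle i : g i <= 0 by rewrite /g subr_le0; case: (bu i).
have sepE : L + \sum_i g i = sep fo x.
  rewrite /L /hi_sum /sep -big_split /=; apply: eq_bigr => i _; rewrite /g /hi.
  by rewrite addrC subrK.
have S := @smins _ _ (index_enum 'I_n) _ L Fhi gle.
rewrite size_ie -/M sepE in S.
have hm : f x <= Num.min (sep fo x) Fhi by rewrite le_min hs hF.
have th : \sum_i (1 - w i / W) * M = (n%:R - 1) * M.
  rewrite -mulr_suml sumrB sumr_const card_ord -mulr_suml -Weq divff //.
  by rewrite gt_eqF.
rewrite /sep (eq_bigr _ (fun i _ => key i)) sumrB th.
move: S hm; rewrite mulrBl mul1r; lra.
Qed.

Theorem corollary1 (R : realType) (n : nat) (a b : 'I_n -> R)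
  (f : ('I_n -> R) -> R) (fu fo : 'I_n -> R -> R) (Flo Fhi : R) :
  (forall i, a i <= b i) ->
  (forall i, {within `[a i, b i], continuous (fu i)}) ->
  (forall i, {within `[a i, b i], continuous (fo i)}) ->
  superposition_relaxation a b f fu fo ->
  (exists i, 0 < wid_on (fu i) (a i) (b i)) ->
  (exists i, 0 < wid_on (fo i) (a i) (b i)) ->
  Flo <= Fhi ->
  (forall x, in_box a b x -> Flo <= f x <= Fhi) ->
  superposition_relaxation a b f (fu_ref a b fu Flo) (fo_ref a b fo Fhi).
Proof.
move=> hab cu co rel eu eo _ hf x xb.
have [h1 h2] := rel x xb.
have /andP [h3 h4] := hf x xb.
split; [exact: lower | exact: upper].
Qed.
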